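(* Let $n\geq 1$. The classes $\alpha^{\mathrm{sgn}}_{\mathcal D}=\frac{1}{|\mathrm{Stab}_{S_n}(\Delta_{\mathcal D})|}\sum_{\sigma\in S_n}\sigma(\mu_{\Delta_{\mathcal D}})\in H^{|E\mathcal D|}(\mathbb{Z}\mathcal{A}_n;\mathbb{Q}_{\mathrm{sgn}})$, for $\mathcal D$ ranging over $\mathcal{D}^{\mathrm{sgn}}_n$, form a basis of $H^\bullet(\Gamma_n;\mathbb{Q}_{\mathrm{sgn}})$, identified with the subspace $H^\bullet(\mathbb{Z}\mathcal{A}_n;\mathbb{Q}_{\mathrm{sgn}})^{S_n}$ of $H^\bullet(\mathbb{Z}\mathcal{A}_n;\mathbb{Q}_{\mathrm{sgn}})$.
   Context: $\mathrm{Br}_n$ is the braid group on $n$ strands, $P_n$ the pure braid group, $\Gamma_n=\mathrm{Br}_n/[P_n,P_n]$, $\mathbb{Z}\mathcal{A}_n=P_n/[P_n,P_n]$, normal in $\Gamma_n$ with quotient $S_n$. $\mathbb{Q}_{\mathrm{sgn}}$ is the sign representation of $S_n$ viewed as a $\Gamma_n$-module (trivial on $\mathbb{Z}\mathcal A_n$); $H^\bullet(\Gamma_n;\mathbb{Q}_{\mathrm{sgn}})$ is identified via restriction with $H^\bullet(\mathbb{Z}\mathcal{A}_n;\mathbb{Q}_{\mathrm{sgn}})^{S_n}$. As $S_n$-module $H^\bullet(\mathbb{Z}\mathcal{A}_n;\mathbb{Q}_{\mathrm{sgn}})=\mathbb{Q}_{\mathrm{sgn}}\otimes\Lambda^\bullet$,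 where $\Lambda^\bullet=H^\bullet(\mathbb{Z}\mathcal A_n;\mathbb{Q})$ is the exterior algebra on $\omega_{ij}$ ($1\le i<j\le n$) with $\sigma(\omega_{ij})=\omega_{\sigma(i)\sigma(j)}$ if $\sigma(i)<\sigma(j)$, $\omega_{\sigma(j)\sigma(i)}$ otherwise. For a graph $\Delta$ on $\{1,\dots,n\}$ with lexicographically ordered edges $(i_1,j_1),\dots,(i_k,j_k)$, $\mu_\Delta=\omega_{i_1j_1}\cdots\omega_{i_kj_k}$; in twisted coefficients $\sigma(\mu_\Delta)=\mathrm{sgn}(\sigma)\mathrm{sgn}_\Delta(\sigma)\mu_{\sigma(\Delta)}$, where $\mathrm{sgn}_\Delta(\sigma)$ is the sign of the bijection induced by $\sigma$ between the ordered edge lists of $\Delta$ and $\sigma(\Delta)$. A graph $\Delta$ with $n$ vertices is skew-invariant if every automorphism $\sigma$ satisfies $\mathrm{sgn}(\sigma)\mathrm{sgn}_\Delta(\sigma)=1$ ($\mathrm{sgn}(\sigma)$ the sign on vertices, $\mathrm{sgn}_\Delta(\sigma)$ the sign on edges). $\mathcal D^{\mathrm{sgn}}_n$ is the set of isomorphism classes of skew-invariant graphs with exactly $n$ vertices, with a fixed representative $\Delta_{\mathcal D}\subset K_n$ for each; $|E\mathcal D|$ is the number of edges. *)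

(* Defs.v *)
From HB Require Import structures.
From mathcomp Require Import all_boot all_order all_algebra all_fingroup.
Set Implicit Arguments. Unset Strict Implicit. Unset Printing Implicit Defensive.
Import GRing.Theory.
Local Open Scope ring_scope.

(* Edges of K_n on vertex set 'I_n (= {1..n} shifted): pairs (i,j) with i<j. *)
Definition edge (n : nat) := {p : 'I_n * 'I_n | (p.1 < p.2)%N}.

Definition graph (n : nat) := {set edge n}.

Definition epair n (s : {perm 'I_n}) (p : 'I_n * 'I_n) : 'I_n * 'I_n :=
  if (s p.1 < s p.2)%N then (s p.1, s p.2) else (s p.2, s p.1).

Lemma epair_lt n (s : {perm 'I_n}) (e : edge n) :
  ((epair s (val e)).1 < (epair s (val e)).2)%N.
Proof.
case: e => [[i j] /= hij]; rewrite /epair /=.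
case: ifP => // /negbT; rewrite -leqNgt leq_eqVlt => /orP [/eqP h|//].
have /perm_inj hji : s j = s i by apply: val_inj.
by move: hij; rewrite hji ltnn.
Qed.

(* sigma(omega_ij) = omega_{sigma(i) sigma(j)} or omega_{sigma(j) sigma(i)} *)
Definition eact n (s : {perm 'I_n}) (e : edge n) : edge n :=
  exist _ (epair s (val e)) (epair_lt s e).

Definition gact n (s : {perm 'I_n}) (D : graph n) : graph n := eact s @: D.

Definition elt n (e f : edge n) : bool :=
  ((val e).1 < (val f).1)%N ||
  (((val e).1 == (val f).1) && ((val e).2 < (val f).2)%N).

(* sgn_Delta(sigma): sign of the bijection induced by sigma between the
   lexicographically ordered edge lists of Delta and sigma(Delta),
   computed as (-1)^(number of inversions). *)
Definition sgnE n (s : {perm 'I_n}) (D : graph n) : rat :=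
  (-1) ^+ #|[set p : edge n * edge n |
             [&& p.1 \in D, p.2 \in D, elt p.1 p.2 & elt (eact s p.2) (eact s p.1)]]|.

Definition sgnV n (s : {perm 'I_n}) : rat := (-1) ^+ odd_perm s.

(* H^*(ZA_n; Q_sgn) = Q_sgn (x) Lambda^*, written in the monomial basis mu_Delta:
   an element is the family of its coordinates. *)
Definition coh (n : nat) := {ffun graph n -> rat^o}.

Definition mu n (D : graph n) : coh n := [ffun G => (G == D)%:R].

Definition act n (s : {perm 'I_n}) (v : coh n) : coh n :=
  \sum_(D : graph n) (v D * (sgnV s * sgnE s D)) *: mu (gact s D).

Definition sn_invariant n (v : coh n) : Prop := forall s : {perm 'I_n}, act s v = v.

Definition stab n (D : graph n) : {set {perm 'I_n}} := [set s | gact s D == D].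

Definition alpha n (D : graph n) : coh n :=
  (#|stab D|%:R)^-1 *: \sum_(s : {perm 'I_n}) act s (mu D).

Definition giso n (D D' : graph n) : Prop := exists s : {perm 'I_n}, gact s D = D'.

Definition skew_invariant n (D : graph n) : Prop :=
  forall s : {perm 'I_n}, gact s D = D -> sgnV s * sgnE s D = 1.

(* reps is a system of representatives Delta_D of D^sgn_n *)
Definition skew_reps n (reps : seq (graph n)) : Prop :=
  [/\ forall D, D \in reps -> skew_invariant D,
      forall D, skew_invariant D -> exists2 D', D' \in reps & giso D D',
      uniq reps &
      forall D D', D \in reps -> D' \in reps -> giso D D' -> D = D'].

(* Main.v *)
Require Import Defs.
From HB Require Import structures.
From mathcomp Require Import all_boot all_order all_algebra all_fingroup.
Import GRing.Theory.
Import Defs.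
Import Num.Theory.
Local Open Scope ring_scope.
Set Implicit Arguments. Unset Strict Implicit.

Section S.
Variable n : nat.
Implicit Types (s t : {perm 'I_n}) (e f : edge n) (D G : graph n).

Lemma elt_irr e : ~~ elt e e.
Proof. by rewrite /elt ltnn eqxx ltnn. Qed.

Lemma elt_total e f : e != f -> elt e f = ~~ elt f e.
Proof.
case: e f => [[i j] hij] [[k l] hkl] /=; rewrite /elt /= => hne.
have [hik|hik|hik] := ltngtP i k.
- by rewrite -[k == i]val_eqE /= (gtn_eqF hik).
- by rewrite -[i == k]val_eqE /= (gtn_eqF hik).
- have eik : i = k by apply: val_inj.
  subst k; rewrite eqxx /=.
  have [hjl|hjl|hjl] := ltngtP j l => //.
  have ejl : j = l by apply: val_inj.
  subst l. by move: hne; rewrite (bool_irrelevance hij hkl) eqxx.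
Qed.

Lemma eact_mul s t e : eact (s * t)%g e = eact t (eact s e).
Proof.
apply: val_inj; case: e => [[i j] hij]; rewrite /= /epair /= !permM.
have hsij : s i != s j by rewrite (inj_eq perm_inj) neq_ltn hij.
have htij : t (s i) != t (s j) by rewrite (inj_eq perm_inj).
move: hsij htij; rewrite -!val_eqE /=.
have [hs|hs|hs] := ltngtP (s i) (s j) => //= _;
have [ht|ht|ht] := ltngtP (t (s i)) (t (s j)) => //= _.
Qed.

Lemma eact1 e : eact 1 e = e.
Proof.
apply: val_inj; case: e => [[i j] hij]; by rewrite /= /epair /= !perm1 hij.
Qed.

Lemma eactK s : cancel (eact s) (eact s^-1).
Proof. by move=> e; rewrite -eact_mul mulgV eact1. Qed.

Lemma eact_inj s : injective (eact s).
Proof. exact: can_inj (eactK s). Qed.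

Lemma gact_mul s t D : gact (s * t)%g D = gact t (gact s D).
Proof. by rewrite /gact -imset_comp; apply: eq_imset => e; rewrite eact_mul. Qed.

Lemma gact1 D : gact 1 D = D.
Proof. by rewrite /gact (eq_imset _ eact1) imset_id. Qed.

Lemma gactK s : cancel (gact s) (gact s^-1).
Proof. by move=> D; rewrite -gact_mul mulgV gact1. Qed.

Lemma gactVK s : cancel (gact s^-1) (gact s).
Proof. by move=> D; rewrite -gact_mul mulVg gact1. Qed.

Lemma gact_inj s : injective (gact s).
Proof. exact: can_inj (gactK s). Qed.


Definition sg e f : rat := if elt e f then 1 else -1.
Definition K s e f := sg (eact s e) (eact s f) * sg e f.

Lemma sgN e f : e != f -> sg f e = - sg e f.
Proof. by move=> h; rewrite /sg (elt_total h); case: (elt f e); rewrite ?opprK. Qed.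

Lemma sg2 e f : sg e f * sg e f = 1.
Proof. by rewrite /sg; case: (elt e f); rewrite ?mulrNN mulr1. Qed.

Lemma K_sym s e f : K s e f = K s f e.
Proof.
have [->|h] := eqVneq e f; first by [].
have h' : eact s e != eact s f by rewrite (inj_eq (@eact_inj s)).
by rewrite /K (sgN h) (sgN h') mulrNN.
Qed.

Lemma sgnE_prod s D : sgnE s D =
  \prod_(p : edge n * edge n | [&& p.1 \in D, p.2 \in D & elt p.1 p.2]) K s p.1 p.2.
Proof.
rewrite /sgnE -prodr_const.
rewrite (eq_bigl (fun p : edge n * edge n => [&& p.1 \in D, p.2 \in D & elt p.1 p.2]
                  && elt (eact s p.2) (eact s p.1))); last first.
  by move=> p; rewrite in_set !andbA.
rewrite big_mkcondr /=; apply: eq_bigr => [[e f]] /and3P [_ _ hef] /=.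
have hne : e != f by apply: contraTneq hef => ->; rewrite elt_irr.
have h' : eact s e != eact s f by rewrite (inj_eq (@eact_inj s)).
by rewrite /K /sg hef (elt_total h'); case: (elt _ _); rewrite ?mulr1.
Qed.

Lemma swap_prod (E : {set edge n}) (H : edge n -> edge n -> rat) (r1 r2 : rel (edge n)) :
  (forall e f, H e f = H f e) -> (forall e, ~~ r1 e e) -> (forall e, ~~ r2 e e) ->
  (forall e f, e != f -> r1 e f = ~~ r1 f e) ->
  (forall e f, e != f -> r2 e f = ~~ r2 f e) ->
  \prod_(p : edge n * edge n | [&& p.1 \in E, p.2 \in E & r1 p.1 p.2]) H p.1 p.2 =
  \prod_(p : edge n * edge n | [&& p.1 \in E, p.2 \in E & r2 p.1 p.2]) H p.1 p.2.
Proof.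
move=> Hs i1 i2 t1 t2.
rewrite (bigID (fun p : edge n * edge n => r2 p.1 p.2)) /=.
rewrite [RHS](bigID (fun p : edge n * edge n => r1 p.1 p.2)) /=.
congr (_ * _).
  by apply: eq_bigl => p; rewrite -!andbA; do 2 congr (_ && _); rewrite andbC.
rewrite (reindex_inj (h := fun p : edge n * edge n => (p.2, p.1))); last first.
  by move=> [a b] [c d] /= [-> ->].
apply: eq_big => [[e f]|[e f] _] /=; last exact: Hs.
have [->|hne] := eqVneq e f.
  by rewrite (negbTE (i1 f)) (negbTE (i2 f)) !andbF.
rewrite (t1 _ _ hne) (t2 _ _ hne) negbK.
by case: (e \in E); case: (f \in E); case: (r1 f e); case: (r2 f e).
Qed.

Lemma sgnE_mul s t D : sgnE (s * t)%g D = sgnE s D * sgnE t (gact s D).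
Proof.
rewrite !sgnE_prod.
rewrite (eq_bigr (fun p : edge n * edge n => K s p.1 p.2 * K t (eact s p.1) (eact s p.2))); last first.
  move=> p _; rewrite /K !eact_mul.
  by rewrite -mulrA [in RHS]mulrC -!mulrA sg2 mulr1 mulrC.
rewrite big_split /=; congr (_ * _).
rewrite [RHS](reindex_inj (h := fun p : edge n * edge n => (eact s p.1, eact s p.2))); last first.
  by move=> [a b] [c d] h; congr pair; apply: (@eact_inj s); [exact: (congr1 fst h) | exact: (congr1 snd h)].
rewrite /=.
rewrite [RHS](eq_bigl (fun p : edge n * edge n => [&& p.1 \in D, p.2 \in D & elt (eact s p.1) (eact s p.2)])); last first.
  by move=> p; rewrite /gact !mem_imset //; apply: eact_inj.
apply: (@swap_prod D (fun e f => K t (eact s e) (eact s f)) (@elt n) (fun e f => elt (eact s e) (eact s f))).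
- by move=> e f; apply: K_sym.
- exact: elt_irr.
- by move=> e; apply: elt_irr.
- by move=> e f; apply: elt_total.
- move=> e f h; apply: elt_total. by rewrite (inj_eq (@eact_inj s)).
Qed.

Definition c s D := sgnV s * sgnE s D.

Lemma c_mul s t D : c (s * t)%g D = c s D * c t (gact s D).
Proof.
rewrite /c sgnE_mul /sgnV odd_permM signr_addb.
by rewrite -!mulrA; congr (_ * _); rewrite mulrCA.
Qed.

Lemma sign2 (k : nat) : ((-1) ^+ k * (-1) ^+ k : rat) = 1.
Proof. by rewrite -exprMn mulrNN mulr1 expr1n. Qed.

Lemma c2 s D : c s D * c s D = 1.
Proof. by rewrite /c mulrACA /sgnV /sgnE !sign2 mulr1. Qed.

Lemma c1 D : c 1 D = 1.
Proof.
have := c_mul 1 1 D; rewrite mulg1 gact1 => h.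
have := c2 1 D; rewrite -h.
by [].
Qed.

Lemma actE s v G : act s v G = v (gact s^-1 G) * c s (gact s^-1 G).
Proof.
rewrite /act sum_ffunE (bigD1 (gact s^-1 G)) //= big1.
  by rewrite !ffunE gactVK eqxx -[_ *: _]/(_ * _) mulr1 addr0.
move=> D hD; rewrite !ffunE.
case: eqP => [h|]; last by rewrite -[_ *: _]/(_ * _) mulr0.
by move: hD; rewrite h gactK eqxx.
Qed.

Lemma invP v : sn_invariant v <-> forall s D, v (gact s D) = c s D * v D.
Proof.
split.
  move=> h s D; rewrite -{1}(h s) actE gactK mulrC //.
move=> h s; apply/ffunP => G; rewrite actE.
have e := congr1 v (gactVK s G); by rewrite -[v G]e [in RHS]h mulrC.
Qed.

Lemma alphaE D G :
  alpha D G = (#|stab D|%:R)^-1 * \sum_(s | gact s D == G) c s D.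
Proof.
rewrite /alpha ffunE sum_ffunE; congr (_ * _).
rewrite [RHS]big_mkcond; apply: eq_bigr => s _.
rewrite actE /mu ffunE.
have [h|h] := eqVneq (gact s D) G.
  by rewrite -h gactK eqxx mul1r.
have -> : (gact s^-1 G == D) = false.
  by apply/negbTE; apply: contra_neq h => <-; rewrite gactVK.
by rewrite mul0r.
Qed.

Lemma alpha_inv D t G : alpha D (gact t G) = c t G * alpha D G.
Proof.
rewrite !alphaE mulrCA; congr (_ * _).
rewrite (reindex_inj (h := fun s => (s * t)%g) (mulIg t)) /=.
rewrite mulr_sumr; apply: eq_big => s.
  by rewrite gact_mul (inj_eq (@gact_inj t)).
by move=> /eqP; rewrite gact_mul => /(@gact_inj t) hs; rewrite c_mul hs mulrC.
Qed.

End S.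

Lemma alpha_self n (D : graph n) : skew_invariant D -> alpha D D = 1.
Proof.
move=> hsk; rewrite alphaE.
rewrite (eq_bigr (fun _ => 1)); last by move=> s /eqP h; exact: hsk.
rewrite (eq_bigl (fun s => s \in stab D)); last by move=> s; rewrite inE.
rewrite sumr_const mulVf // pnatr_eq0 -lt0n; apply/card_gt0P; exists 1%g.
by rewrite inE gact1.
Qed.

Lemma alpha_out n (D G : graph n) : ~ giso D G -> alpha D G = 0.
Proof.
move=> hn; rewrite alphaE big_pred0 ?mulr0 // => s.
by apply/negbTE/eqP => h; apply: hn; exists s.
Qed.

Lemma giso_trans n (D E F : graph n) : giso D E -> giso E F -> giso D F.
Proof. by move=> [s hs] [t ht]; exists (s * t)%g; rewrite gact_mul hs. Qed.

Unset Implicit Arguments.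
Set Strict Implicit.

Theorem theorem2p21 (n : nat) (hn : (1 <= n)%N) (reps : seq (graph n)) :
  skew_reps reps ->
  [/\ forall D, D \in reps -> sn_invariant (alpha D),
      free [seq alpha D | D <- reps] &
      forall v : coh n, sn_invariant v -> v \in <<[seq alpha D | D <- reps]>>%VS].
Proof.
move=> [Hskew Hcover Huniq Hdist]; split.
- by move=> D _; apply/invP => s G; exact: alpha_inv.
- apply: (introT (@freeP _ _ _ (in_tuple [seq alpha D | D <- reps]))) => k hk i.
  have hi : (i < size reps)%N by rewrite -(size_map (@alpha n)); exact: ltn_ord.
  set Di := nth set0 reps i.
  have := congr1 (fun f : coh n => f Di) hk; rewrite /= sum_ffunE ffunE.
  rewrite (bigD1 i) //= big1 ?addr0.
    rewrite ffunE (nth_map set0) // alpha_self; last by apply: Hskew; exact: mem_nth.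
    by rewrite -[(k i)%:A]/(k i * 1) mulr1.
  move=> j hj; rewrite ffunE.
  have hj' : (j < size reps)%N by rewrite -(size_map (@alpha n)); exact: ltn_ord.
  rewrite (nth_map set0) // alpha_out ?scaler0 //.
  move=> hiso; move: hj; rewrite -val_eqE /= => /eqP; apply.
  apply/eqP; rewrite -(nth_uniq set0 hj' hi Huniq); apply/eqP.
  by apply: Hdist => //; apply: mem_nth.
move=> v hv0; have hv := iffLR (invP v) hv0.
suff -> : v = \sum_(D <- reps) v D *: alpha D.
  by rewrite big_seq; apply: rpred_sum => D hD; apply: rpredZ; rewrite memv_span // map_f.
apply/ffunP => G; rewrite sum_ffunE.
have [vG0|vGn0] := eqVneq (v G) 0.
  rewrite vG0 big1 // => D _; rewrite ffunE.
  case: (boolP [exists s, gact s D == G]) => [/existsP [s /eqP hs]|/existsPn hno].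
    have : v D = c s D * v G by rewrite -hs hv mulrA c2 mul1r.
    by rewrite vG0 mulr0 => ->; rewrite scale0r.
  rewrite alpha_out ?scaler0 // => [[s hs]].
  by move: (hno s); rewrite hs eqxx.
have Gsk : skew_invariant G.
  move=> s hs; have := hv s G; rewrite hs => h.
  by apply: (mulIf vGn0); rewrite -h mul1r.
have [D' hD' [t ht]] := Hcover G Gsk.
rewrite (bigD1_seq D') //= big_seq_cond big1 ?addr0.
  have hG : G = gact t^-1 D' by rewrite -ht gactK.
  have vD' : v D' = c t G * v G by rewrite -ht hv.
  have aG : alpha D' G = c t^-1 D'.
    by rewrite hG alpha_inv alpha_self ?mulr1 //; exact: Hskew.
  rewrite ffunE vD' aG -[_ *: _]/(_ * _).
  have := c_mul t t^-1 G; rewrite mulgV c1 ht => h.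
  by rewrite mulrC mulrA [c t^-1 D' * _]mulrC -h mul1r.
move=> D /andP [hD hne]; rewrite ffunE alpha_out ?scaler0 // => hiso.
move: hne; rewrite (Hdist D D' hD hD') ?eqxx //.
by apply: giso_trans hiso _; exists t.
Qed.
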